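(* Let $L$ be a subspace of $\bigwedge^{k}V$, let $I\subseteq[n]$ be nonempty, and let $a=\min I$. Suppose $N_{j\to i}L=L$ for all $i<j$ with $i,j\in I$. Then $L$ has a basis consisting of elements of the form $x\wedge y$, where $x$ is a homogeneous form in $\bigwedge V^{(I\setminus\{a\})}$ and $y$ is a monomial whose variable set is a subset of $\{e_h:h\in I\}$.
   Context: $\mathbb{F}$ is a field (assumed throughout the paper, for expository purposes, to have characteristic not $2$), $V$ is an $n$-dimensional $\mathbb{F}$-vector space with a fixed basis $e_1,\dots,e_n$, and $\bigwedge V$ its exterior algebra; for $S=\{s_1<\cdots<s_r\}\subseteq[n]$, the monomial $e_S=e_{s_1}\wedge\cdots\wedge e_{s_r}$ has variable set $\{e_s:s\in S\}$, and the monomials with $|S|=k$ form a basis of $\bigwedge^kV$. For $J\subseteq[n]$, $V^{(J)}$ is the span of $\{e_h:h\notin J\}$ (so $V^{(I\setminus\{a\})}$ is spanned by $e_a$ and the $e_h$ with $h\notin I$), $V^{(j)}=V^{(\{j\})}$, and $\bigwedge V^{(J)}$ is viewed as a subalgebra of $\bigwedge V$. Slow shift: for distinct $i,j\in[n]$ and nonzero $m\in\bigwedge^kV$, write uniquely $m=x'+e_j\wedge y'$ with $x'\in\bigwedge^kV^{(j)}$, $y'\in\bigwedge^{k-1}V^{(j)}$, and set $N_{j\to i}m=x'+e_i\wedge y'$ if this is nonzero, and $N_{j\to i}m=e_j\wedge y'$ otherwise (the limit as $t\to0$ of the projective action of $e_j\mapsto e_i+te_j$ fixing the other $e_h$). For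 a subspace $L$, $N_{j\to i}L$ is the span of $\{N_{j\to i}m:m\in L\setminus\{0\}\}$. *)

(* Defs.v *)
(* Exterior algebra of V = F^n with basis e_0..e_{n-1},
   represented by coefficient vectors indexed by subsets S of 'I_n
   (the coefficient of the monomial e_S). *)
From HB Require Import structures.
From mathcomp Require Import all_boot all_order all_algebra.
Set Implicit Arguments. Unset Strict Implicit. Unset Printing Implicit Defensive.
Import Order.TTheory GRing.Theory Num.Theory.
Local Open Scope ring_scope.

Definition ext (F : fieldType) (n : nat) := {ffun {set 'I_n} -> F^o}.

Definition emono (F : fieldType) (n : nat) (S : {set 'I_n}) : ext F n :=
  [ffun U => (U == S)%:R].

(* Sign of e_S /\ e_T = sgn S T * e_(S u T) for disjoint S, T:
   (-1)^(number of pairs s in S, t in T with t < s). *)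
Definition wsign (F : fieldType) (n : nat) (S T : {set 'I_n}) : F :=
  (-1) ^+ #|[set p : 'I_n * 'I_n | [&& p.1 \in S, p.2 \in T & (p.2 < p.1)%N]]|.

Definition wedge (F : fieldType) (n : nat) (x y : ext F n) : ext F n :=
  [ffun U => \sum_(S : {set 'I_n}) \sum_(T : {set 'I_n} |
        (S :&: T == set0) && (S :|: T == U)) wsign F S T * x S * y T].

Definition homog (F : fieldType) (n : nat) (k : nat) (x : ext F n) : Prop :=
  forall S : {set 'I_n}, #|S| != k -> x S = 0.

(* x lies in the subalgebra /\ V^(J), V^(J) = span{e_h : h \notin J}. *)
Definition in_sub (F : fieldType) (n : nat) (J : {set 'I_n}) (x : ext F n) : Prop :=
  forall S : {set 'I_n}, x S != 0 -> [disjoint S & J].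

(* Decomposition m = x' + e_j /\ y' with x', y' in /\ V^(j). *)
Definition xpart (F : fieldType) (n : nat) (j : 'I_n) (m : ext F n) : ext F n :=
  [ffun S : {set 'I_n} => if j \in S then 0 else m S].
Definition ypart (F : fieldType) (n : nat) (j : 'I_n) (m : ext F n) : ext F n :=
  [ffun T : {set 'I_n} => if j \in T then 0
             else ((-1) ^+ #|[set t in T | (t < j)%N]| : F) * m (j |: T)].

Definition slow_shift (F : fieldType) (n : nat) (j i : 'I_n) (m : ext F n) : ext F n :=
  let c := xpart j m + wedge (emono F [set i]) (ypart j m) in
  if c != 0 then c else wedge (emono F [set j]) (ypart j m).

Definition in_span (F : fieldType) (n : nat) (P : ext F n -> Prop) (v : ext F n) : Prop :=
  forall U : {vspace ext F n}, (forall w, P w -> w \in U) -> v \in U.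

Definition shift_fixed (F : fieldType) (n : nat) (j i : 'I_n) (L : {vspace ext F n}) : Prop :=
  forall v, in_span (fun w => exists m, [/\ m \in L, m != 0 & w = slow_shift j i m]) v
            <-> v \in L.

(* Main.v *)
Require Import Defs.
From HB Require Import structures.
From mathcomp Require Import all_boot all_order all_algebra.
Set Implicit Arguments. Unset Strict Implicit. Unset Printing Implicit Defensive.
Import Order.TTheory GRing.Theory Num.Theory.
Local Open Scope ring_scope.

Section S.
Variables (F : fieldType) (n : nat).
Definition mask (p : pred {set 'I_n}) (v : ext F n) : ext F n :=
  [ffun S => if p S then v S else 0].
Fact mask_lin p : linear (mask p).
Proof. move=> c u v; apply/ffunP=> S; rewrite !ffunE; case: ifP => _ //; by rewrite scaler0 addr0. Qed.
HB.instance Definition _ p := GRing.isLinear.Build F (ext F n) (ext F n) *:%R (mask p) (mask_lin p).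
Definition Mk p : 'End(ext F n) := linfun (mask p).
Lemma MkE p v : Mk p v = mask p v. Proof. by rewrite lfunE. Qed.

Lemma wedge_supp (x y : ext F n) U : wedge x y U != 0 ->
  exists S T, [/\ S :&: T = set0, S :|: T = U, x S != 0 & y T != 0].
Proof.
rewrite ffunE => H.
have [/existsP [S /existsP [T /and4P[h1 h2 h3 h4]]] | hn] :=
  boolP [exists S, exists T, [&& (S :&: T == set0), (S :|: T == U), x S != 0 & y T != 0]].
  by exists S, T; split => //; apply/eqP.
case/eqP: H; rewrite big1 // => S _; rewrite big1 // => T /andP[h1 h2].
move/existsPn: hn => /(_ S) /existsPn /(_ T); rewrite h1 h2 /= negb_and !negbK.
by case/orP => /eqP ->; rewrite ?(mulr0, mul0r).
Qed.

Lemma emono_supp (S U : {set 'I_n}) : emono F S U != 0 -> U = S.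
Proof. by rewrite ffunE; case: (U =P S) => // _; rewrite eqxx. Qed.

Lemma key (i j : 'I_n) (L : {vspace ext F n}) : i != j -> shift_fixed j i L ->
  forall v, v \in L -> xpart j v \in L.
Proof.
move=> hij hf.
pose p0 := fun S : {set 'I_n} => j \notin S.
pose p1 := fun S : {set 'I_n} => j \in S.
have memW p w : mask p w = w -> w \in (Mk p @: fullv)%VS.
  by move=> h; rewrite -h -MkE memv_img ?memvf.
have W_eq p w : w \in (Mk p @: fullv)%VS -> mask p w = w.
  by case/memv_imgP => u _ ->; rewrite MkE; apply/ffunP => S; rewrite !ffunE; by case: (p S).
have genL m : m \in L -> m != 0 -> slow_shift j i m \in L.
  by move=> mL m0; apply/(hf _).1 => U HU; apply: HU; exists m.
move=> v vL.
have : v \in ((L :&: (Mk p0 @: fullv)) + (L :&: (Mk p1 @: fullv)))%VS.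
  apply: ((hf v).2 vL) => w [m [mL m0 ->]].
  have wL := genL m mL m0.
  move: wL; rewrite /slow_shift /=; case: ifP => hc wL.
  - apply: (subvP (addvSl _ _)); rewrite memv_cap wL /=; apply: memW.
    apply/ffunP => S; rewrite ffunE /p0; case: ifP => // /negbFE jS.
    apply/esym/eqP; apply: contraT => hS.
    move: hS; rewrite ffunE [xpart _ _ _]ffunE jS add0r.
    case/wedge_supp => S1 [T [_ hU /emono_supp e1 hy]].
    move: hy; rewrite ffunE; case: ifP => [_|jT _]; first by rewrite eqxx.
    move: jS; rewrite -hU e1 !inE jT orbF => /eqP ji.
    by move: hij; rewrite ji eqxx.
  - apply: (subvP (addvSr _ _)); rewrite memv_cap wL /=; apply: memW.
    apply/ffunP => S; rewrite ffunE /p1; case: ifP => // jS.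
    apply/esym/eqP; apply: contraFT jS => hS.
    case/wedge_supp: hS => S1 [T [_ hU /emono_supp e1 hy]].
    by rewrite -hU e1 !inE eqxx.
case/memv_addP => a0 h0 [a1 h1 ->].
rewrite memv_cap in h0; rewrite memv_cap in h1.
case/andP: h0 => h0L /W_eq e0; case/andP: h1 => _ /W_eq e1.
have -> : xpart j (a0 + a1) = a0.
  apply/ffunP => S; rewrite -e0 -e1 !ffunE /p0 /p1.
  by case: (j \in S) => /=; rewrite ?addr0 ?add0r.
done.
Qed.

Definition Rs (T : {set 'I_n}) (s : seq 'I_n) (v : ext F n) : ext F n :=
  [ffun U : {set 'I_n} => if all (fun j => (j \in U) == (j \in T)) s then v U else 0].

Lemma Rs_closed (L : {vspace ext F n}) T s :
  (forall j, j \in s -> forall v, v \in L -> xpart j v \in L) ->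
  forall v, v \in L -> Rs T s v \in L.
Proof.
elim: s => [|j s IH] H v vL.
  by have -> : Rs T [::] v = v by apply/ffunP => U; rewrite ffunE.
have IH' : Rs T s v \in L.
  by apply: IH vL => j' hj'; apply: H; rewrite inE hj' orbT.
have Hj := H j (mem_head _ _).
case hjT: (j \in T).
  have -> : Rs T (j :: s) v = Rs T s v - xpart j (Rs T s v).
    apply/ffunP => U; rewrite !ffunE /= hjT.
    by case: (j \in U) => /=; rewrite ?subr0 ?subrr.
  by apply: memvB => //; apply: Hj.
have -> : Rs T (j :: s) v = xpart j (Rs T s v).
  apply/ffunP => U; rewrite !ffunE /= hjT.
  by case: (j \in U).
exact: Hj.
Qed.

Lemma mask_Rs (J T : {set 'I_n}) v : T \subset J ->
  mask (fun U => U :&: J == T) v = Rs T (enum J) v.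
Proof.
move=> hT; apply/ffunP => U; rewrite !ffunE; congr (if _ then _ else _).
apply/eqP/allP.
  by move=> <- j; rewrite mem_enum => jJ; rewrite inE jJ andbT.
move=> H; apply/setP => j; rewrite inE; case jJ: (j \in J).
  by rewrite andbT; apply/eqP; apply: H; rewrite mem_enum.
by rewrite andbF; apply/esym/negbTE; apply: contraFN jJ; apply: (subsetP hT).
Qed.

Lemma decomp (J : {set 'I_n}) (v : ext F n) :
  v = \sum_(T : {set 'I_n} | T \subset J) mask (fun U => U :&: J == T) v.
Proof.
apply/ffunP => U; rewrite sum_ffunE (bigD1 (U :&: J)) ?subsetIr //= ffunE eqxx.
rewrite big1 ?addr0 // => T /andP[_ hT]; rewrite ffunE eq_sym.
by rewrite (negPf hT).
Qed.

Lemma sign_sq (S T : {set 'I_n}) : wsign F S T * wsign F S T = 1.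
Proof. by rewrite /wsign -exprMn mulrNN mulr1 expr1n. Qed.

Lemma sum_delta (c : pred {set 'I_n}) (f : {set 'I_n} -> F) (T : {set 'I_n}) :
  \sum_(t | c t) f t * emono F T t = if c T then f T else 0.
Proof.
rewrite big_mkcond (bigD1 T) //= ffunE eqxx mulr1 big1 ?addr0 // => t /negPf tT.
by rewrite ffunE tT mulr0; case: ifP.
Qed.

Lemma wedge_form k (J T : {set 'I_n}) (v : ext F n) : T \subset J -> homog k v ->
  (forall U, v U != 0 -> U :&: J = T) ->
  exists (x : ext F n) (d : nat), [/\ homog d x, in_sub J x & v = wedge x (emono F T)].
Proof.
move=> hTJ hv hs.
pose x : ext F n := [ffun S : {set 'I_n} => if [disjoint S & J] then wsign F S T * v (S :|: T) else 0].
exists x, (k - #|T|)%N; split.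
- move=> S hS; rewrite ffunE; case: ifP => // hd.
  apply/eqP; rewrite mulf_eq0; apply/orP; right; apply/eqP; apply: hv.
  have hST : S :&: T = set0.
    by apply/eqP; rewrite setI_eq0; apply: disjointWr hTJ hd.
  rewrite cardsU hST cards0 subn0.
  by move: hS; apply: contra => /eqP <-; rewrite addnK.
- by move=> S; rewrite ffunE; case: ifP => //; rewrite eqxx.
apply/ffunP => U; rewrite ffunE.
transitivity (\sum_(S : {set 'I_n}) (if (S :&: T == set0) && (S :|: T == U)
      then wsign F S T * x S else 0)); last first.
  by apply: eq_bigr => S _; rewrite (sum_delta (fun t => (S :&: t == set0) && (S :|: t == U))
        (fun t => wsign F S t * x S)).
case: (boolP (T \subset U)) => hTU.
  have UDT : (U :\: T) :|: T = U.
    apply/setP => y; rewrite !inE; case yT: (y \in T) => /=; rewrite ?orbT ?orbF ?andbT //.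
    by rewrite (subsetP hTU).
  rewrite (bigD1 (U :\: T)) //=.
  rewrite UDT eqxx andbT.
  have -> : ((U :\: T) :&: T == set0) = true.
    by apply/eqP/setP => y; rewrite !inE; case: (y \in T); rewrite ?andbF.
  rewrite big1 ?addr0; last first.
    move=> S hne; case: ifP => // /andP[/eqP h1 /eqP h2].
    exfalso; move/eqP: hne; apply; apply/setP => y; rewrite -h2 !inE.
    case yT: (y \in T) => /=; last by rewrite orbF.
    have := congr1 (fun A : {set 'I_n} => y \in A) h1; rewrite !inE yT andbT => ->.
    by [].
  rewrite ffunE; case: ifP => hd.
    by rewrite UDT mulrA sign_sq mul1r.
  rewrite mulr0; apply/eqP; apply: contraFT hd => h.
  have hUJ := hs U h.
  rewrite -setI_eq0; apply/eqP/setP => y; rewrite !inE.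
  have := congr1 (fun A : {set 'I_n} => y \in A) hUJ; rewrite !inE => <-.
  by case: (y \in U); case: (y \in J).
rewrite big1; last first.
  move=> S _; case: ifP => // /andP[_ /eqP h2]; exfalso.
  by move: hTU; rewrite -h2 subsetUr.
apply/eqP; apply: contraNT hTU => h.
by rewrite -(hs U h) subsetIl.
Qed.
End S.

Theorem theorem3p13 (F : fieldType) (hchar : (2%:R : F) != 0)
  (n k : nat) (L : {vspace ext F n})
  (hL : forall v, v \in L -> homog k v)
  (I : {set 'I_n}) (a : 'I_n) (ha : a \in I) (hmin : forall h, h \in I -> (a <= h)%N)
  (hfix : forall i j : 'I_n, i \in I -> j \in I -> (i < j)%N -> shift_fixed j i L) :
  exists b : seq (ext F n),
    basis_of L b /\
    forall v, v \in b ->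
      exists (x : ext F n) (d : nat) (S : {set 'I_n}),
        [/\ homog d x, in_sub (I :\ a) x, S \subset I & v = wedge x (emono F S)].
Proof.
set J := I :\ a.
have Hx : forall j, j \in J -> forall v, v \in L -> xpart j v \in L.
  move=> j; rewrite in_setD1 => /andP[ja jI].
  have aj : a != j by rewrite eq_sym.
  apply: (key aj (hfix a j ha jI _)).
  by rewrite ltn_neqAle hmin // andbT (inj_eq val_inj).
pose Q (T : {set 'I_n}) := @mask F n (fun U : {set 'I_n} => U :&: J == T).
have HQ : forall T : {set 'I_n}, T \subset J -> forall v, v \in L -> Q T v \in L.
  move=> T hT v vL; rewrite /Q mask_Rs //; apply: Rs_closed vL => j.
  by rewrite mem_enum; apply: Hx.
pose pT (T : {set 'I_n}) := fun U : {set 'I_n} => U :&: J == T.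
pose Us (T : {set 'I_n}) := (Mk F (pT T) @: L)%VS.
have UsL : forall T : {set 'I_n}, T \subset J -> (Us T <= L)%VS.
  by move=> T hT; apply/subvP => w /memv_imgP [u uL ->]; rewrite MkE; apply: HQ.
have Usupp : forall (T : {set 'I_n}) w U, w \in Us T -> w U != 0 -> U :&: J = T.
  by move=> T w U /memv_imgP [u _ ->]; rewrite MkE ffunE; rewrite /pT; case: (U :&: J =P T) => // _; rewrite eqxx.
have sumL : (\sum_(T : {set 'I_n} | T \subset J) Us T)%VS = L.
  apply/eqP; rewrite eqEsubv; apply/andP; split.
    by apply/subv_sumP => T; apply: UsL.
  apply/subvP => v vL; rewrite [v](decomp J); apply: memv_sumr => T _.
  by rewrite -MkE memv_img.
have dir : directv (\sum_(T : {set 'I_n} | T \subset J) Us T).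
  apply/directv_sum_independent => us Hus Hsum T0 hT0.
  apply/ffunP => U; rewrite ffunE.
  case: (eqVneq (U :&: J) T0) => hU.
    have := congr1 (fun f : ext F n => f U) Hsum; rewrite sum_ffunE ffunE (bigD1 T0) //=.
    rewrite big1 ?addr0 // => T /andP[hTJ hT]; apply/eqP; apply: contraNT hT => h.
    by rewrite -(Usupp _ _ _ (Hus T hTJ) h) hU.
  apply/eqP; apply: contraNT hU => h; apply/eqP; exact: Usupp _ _ _ (Hus T0 hT0) h.
exists (\big[cat/[::]]_(T : {set 'I_n} | T \subset J) vbasis (Us T)); split.
  by rewrite -sumL; apply: bigcat_basis => // T _; apply: vbasisP.
move=> v vb.
have [T [hTJ vT]] : exists T : {set 'I_n}, T \subset J /\ v \in vbasis (Us T).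
  move: vb; elim/big_rec: _ => [|T l hT IH] //.
  by rewrite mem_cat => /orP[h|h]; [exists T | exact: IH].
have vU := vbasis_mem vT.
have vL : v \in L := subvP (UsL T hTJ) _ vU.
have [x [d [h1 h2 h3]]] := wedge_form hTJ (hL _ vL) (fun U h => Usupp _ _ _ vU h).
exists x, d, T; split => //.
by apply: subset_trans hTJ (subsetDl _ _).
Qed.
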